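(* Consider the $K$-class $N$-agent system and mean-field model described in the context, with constants $M_R,L_R,L_P,L_Q>0$ and discount factor $\gamma\in[0,1)$. Let $\mathbf{x}_0^{\mathbf{N}}$ be given (deterministic) initial states of all agents and $\boldsymbol{\mu}_0\in\mathcal{P}(\mathcal{X}\times[K])$ their empirical joint distribution. Define $S_R= M_R(1+L_Q)+L_R(2+L_Q)$, $S_P= (1+L_Q)+L_P(2+L_Q)$, $C_R= M_R+L_R$, $C_P= 2+L_P$. If $\gamma S_P<1$, then for every policy $\boldsymbol{\pi}\in\Pi$, $$\Big|v^{\mathbf{N}}(\mathbf{x}_0^{\mathbf{N}},\boldsymbol{\pi})-v^{\mathrm{MF}}(\boldsymbol{\mu}_0,\boldsymbol{\pi})\Big|\le \frac{C_R}{1-\gamma}\sqrt{|\mathcal{U}|}\,\frac{1}{N_{\mathrm{pop}}}\Big(\sum_{k\in[K]}\sqrt{N_k}\Big)+C_P\Big(\frac{S_R}{S_P-1}\Big)\sqrt{|\mathcal{X}||\mathcal{U}|}\,\frac{1}{N_{\mathrm{pop}}}\Big(\sum_{k\in[K]}\sqrt{N_k}\Big)\Big[\frac{1}{1-\gamma S_P}-\frac{1}{1-\gamma}\Big].$$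
   Context: Fix integers $K\ge1$, $N_1,\dots,N_K\ge1$, write $[K]=\{1,\dots,K\}$, $N_{\mathrm{pop}}=\sum_{k}N_k$, $\mathbf{N}=(N_k)_k$, and let $\mathcal{X},\mathcal{U}$ be finite state and action sets. For a finite set $A$, $\mathcal{P}(A)$ is the set of probability distributions on $A$, and $|\cdot|_1$ is the $L_1$ norm. Agent $j\in[N_k]$ of class $k$ has state $x_{j,k}^{t}\in\mathcal{X}$ and action $u_{j,k}^{t}\in\mathcal{U}$ at time $t\in\{0,1,\dots\}$; $\mathbf{x}_t^{\mathbf{N}},\mathbf{u}_t^{\mathbf{N}}$ denote all states/actions at time $t$. Empirical joint distributions: $\boldsymbol{\mu}_t^{\mathbf{N}}(x,k)=\frac{1}{N_{\mathrm{pop}}}\sum_{j=1}^{N_k}\mathbf 1(x_{j,k}^t=x)$, $\boldsymbol{\nu}_t^{\mathbf{N}}(u,k)=\frac{1}{N_{\mathrm{pop}}}\sum_{j=1}^{N_k}\mathbf 1(u_{j,k}^t=u)$, elements of $\mathcal{P}(\mathcal{X}\times[K])$ and $\mathcal{P}(\mathcal{U}\times[K])$. For each $k$ there are a reward function $r_k:\mathcal{X}\times\mathcal{U}\times\mathcal{P}(\mathcal{X}\times[K])\times\mathcal{P}(\mathcal{U}\times[K])\to\mathbb{R}$ and a transition law $P_k:\mathcal{X}\times\mathcal{U}\times\mathcal{P}(\mathcal{X}\times[K])\times\mathcal{P}(\mathcal{U}\times[K])\to\mathcal{P}(\mathcal{X})$ such that for all $x,u,k,\boldsymbol\mu_1,\boldsymbol\mu_2,\boldsymbol\nu_1,\boldsymbol\nu_2$: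 $|r_k(x,u,\boldsymbol\mu_1,\boldsymbol\nu_1)|\le M_R$, $|r_k(x,u,\boldsymbol\mu_1,\boldsymbol\nu_1)-r_k(x,u,\boldsymbol\mu_2,\boldsymbol\nu_2)|\le L_R(|\boldsymbol\mu_1-\boldsymbol\mu_2|_1+|\boldsymbol\nu_1-\boldsymbol\nu_2|_1)$, $|P_k(x,u,\boldsymbol\mu_1,\boldsymbol\nu_1)-P_k(x,u,\boldsymbol\mu_2,\boldsymbol\nu_2)|_1\le L_P(|\boldsymbol\mu_1-\boldsymbol\mu_2|_1+|\boldsymbol\nu_1-\boldsymbol\nu_2|_1)$. A policy is $\boldsymbol\pi=\{\boldsymbol\pi_t\}_{t\ge0}$, $\boldsymbol\pi_t=(\pi_k^t)_{k\in[K]}$, with decision rules $\pi_k^t:\mathcal{X}\times\mathcal{P}(\mathcal{X}\times[K])\to\mathcal{P}(\mathcal{U})$. $\Pi$ is the set of policies with $|\pi_k^t(x,\boldsymbol\mu_1)-\pi_k^t(x,\boldsymbol\mu_2)|_1\le L_Q|\boldsymbol\mu_1-\boldsymbol\mu_2|_1$ for all $t,k,x,\boldsymbol\mu_1,\boldsymbol\mu_2$. Dynamics of the $\mathbf N$-agent system under $\boldsymbol\pi$: conditioned on $\mathbf{x}_t^{\mathbf{N}}$, actions are drawn independently across agents with $u_{j,k}^t\sim\pi_k^t(x_{j,k}^t,\boldsymbol\mu_t^{\mathbf N})$; conditioned on $\mathbf{x}_t^{\mathbf{N}},\mathbf{u}_t^{\mathbf{N}}$, next states are drawn independently across agents with $x_{j,k}^{t+1}\sim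 P_k(x_{j,k}^t,u_{j,k}^t,\boldsymbol\mu_t^{\mathbf N},\boldsymbol\nu_t^{\mathbf N})$. Empirical value: $v^{\mathbf N}(\mathbf x_0^{\mathbf N},\boldsymbol\pi)=\frac{1}{N_{\mathrm{pop}}}\sum_k\sum_{j=1}^{N_k}\mathbb E\big[\sum_{t\ge0}\gamma^t r_k(x_{j,k}^t,u_{j,k}^t,\boldsymbol\mu_t^{\mathbf N},\boldsymbol\nu_t^{\mathbf N})\big]$. Mean-field operators for $\boldsymbol\mu\in\mathcal P(\mathcal X\times[K])$ and a collection $\boldsymbol\pi=(\pi_k)_k$ of decision rules: $\nu^{\mathrm{MF}}(\boldsymbol\mu,\boldsymbol\pi)(u,k)=\sum_x\pi_k(x,\boldsymbol\mu)(u)\boldsymbol\mu(x,k)$; $P^{\mathrm{MF}}(\boldsymbol\mu,\boldsymbol\pi)(x',k)=\sum_{x,u}\boldsymbol\mu(x,k)\pi_k(x,\boldsymbol\mu)(u)P_k(x,u,\boldsymbol\mu,\nu^{\mathrm{MF}}(\boldsymbol\mu,\boldsymbol\pi))(x')$; $r_k^{\mathrm{MF}}(\boldsymbol\mu,\boldsymbol\pi)=\sum_{x,u}\boldsymbol\mu(x,k)\pi_k(x,\boldsymbol\mu)(u)r_k(x,u,\boldsymbol\mu,\nu^{\mathrm{MF}}(\boldsymbol\mu,\boldsymbol\pi))$. Mean-field value: with $\boldsymbol\mu_{t+1}=P^{\mathrm{MF}}(\boldsymbol\mu_t,\boldsymbol\pi_t)$, $v^{\mathrm{MF}}(\boldsymbol\mu_0,\boldsymbol\pi)=\sum_k\sum_{t\ge0}\gamma^t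 r_k^{\mathrm{MF}}(\boldsymbol\mu_t,\boldsymbol\pi_t)$. *)

(* Defs.v *)
From HB Require Import structures.
From mathcomp Require Import all_boot all_order all_algebra.
From mathcomp Require Import all_classical all_reals all_analysis.
Set Implicit Arguments. Unset Strict Implicit. Unset Printing Implicit Defensive.
Import Order.TTheory GRing.Theory Num.Theory numFieldNormedType.Exports.
Local Open Scope ring_scope.

Section MF.
Variables (R : realType) (X U : finType) (K : nat) (N : 'I_K -> nat).

Definition agent := {k : 'I_K & 'I_(N k)}.
Definition Npop : nat := (\sum_(k < K) N k)%N.

Definition jdistX := {ffun X * 'I_K -> R}.
Definition jdistU := {ffun U * 'I_K -> R}.

Definition is_distr (A : finType) (p : {ffun A -> R}) : Prop :=
  (forall a, 0 <= p a) /\ \sum_a p a = 1.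

Definition l1 (A : finType) (p q : {ffun A -> R}) : R := \sum_a `|p a - q a|.

Definition reward_t := 'I_K -> X -> U -> jdistX -> jdistU -> R.
Definition trans_t := 'I_K -> X -> U -> jdistX -> jdistU -> {ffun X -> R}.
Definition policy_t := nat -> 'I_K -> X -> jdistX -> {ffun U -> R}.

Definition emp_mu (xs : {ffun agent -> X}) : jdistX :=
  [ffun p : X * 'I_K => (\sum_(a : agent | tag a == p.2) (xs a == p.1)%:R) / Npop%:R].
Definition emp_nu (us : {ffun agent -> U}) : jdistU :=
  [ffun p : U * 'I_K => (\sum_(a : agent | tag a == p.2) (us a == p.1)%:R) / Npop%:R].

Variables (r : reward_t) (P : trans_t) (pi : policy_t).

Definition act_prob (t : nat) (xs : {ffun agent -> X}) (us : {ffun agent -> U}) : R :=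
  \prod_(a : agent) pi t (tag a) (xs a) (emp_mu xs) (us a).

Definition step_prob (xs : {ffun agent -> X}) (us : {ffun agent -> U})
  (xs' : {ffun agent -> X}) : R :=
  \prod_(a : agent) P (tag a) (xs a) (us a) (emp_mu xs) (emp_nu us) (xs' a).

Fixpoint state_law (x0 : {ffun agent -> X}) (t : nat) : {ffun {ffun agent -> X} -> R} :=
  match t with
  | 0 => [ffun xs => (xs == x0)%:R]
  | t'.+1 => [ffun xs' => \sum_xs \sum_us
               state_law x0 t' xs * act_prob t' xs us * step_prob xs us xs']
  end.

Definition exp_reward (x0 : {ffun agent -> X}) (t : nat) : R :=
  \sum_xs \sum_us state_law x0 t xs * act_prob t xs us *
     ((\sum_(a : agent) r (tag a) (xs a) (us a) (emp_mu xs) (emp_nu us)) / Npop%:R).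

Definition vN (gamma : R) (x0 : {ffun agent -> X}) : R :=
  limn (series (fun t => gamma ^+ t * exp_reward x0 t)).

Definition nuMF (mu : jdistX) (pit : 'I_K -> X -> jdistX -> {ffun U -> R}) : jdistU :=
  [ffun p : U * 'I_K => \sum_x pit p.2 x mu p.1 * mu (x, p.2)].
Definition PMF (mu : jdistX) (pit : 'I_K -> X -> jdistX -> {ffun U -> R}) : jdistX :=
  [ffun p : X * 'I_K => \sum_x \sum_u
     mu (x, p.2) * pit p.2 x mu u * P p.2 x u mu (nuMF mu pit) p.1].
Definition rMF (k : 'I_K) (mu : jdistX) (pit : 'I_K -> X -> jdistX -> {ffun U -> R}) : R :=
  \sum_x \sum_u mu (x, k) * pit k x mu u * r k x u mu (nuMF mu pit).

Fixpoint mu_traj (mu0 : jdistX) (t : nat) : jdistX :=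
  match t with 0 => mu0 | t'.+1 => PMF (mu_traj mu0 t') (pi t') end.

Definition vMF (gamma : R) (mu0 : jdistX) : R :=
  \sum_(k < K) limn (series (fun t => gamma ^+ t * rMF k (mu_traj mu0 t) (pi t))).

End MF.

(* Main.v *)
Require Import Defs.
From HB Require Import structures.
From mathcomp Require Import all_boot all_order all_algebra.
From mathcomp Require Import all_classical all_reals all_analysis.
From mathcomp Require Import ring lra.
Set Implicit Arguments. Unset Strict Implicit. Unset Printing Implicit Defensive.
Import Order.TTheory GRing.Theory Num.Theory.
Local Open Scope ring_scope.

Section Gen.
Variable R : realType.

Lemma CSw (T : finType) (w s : T -> R) : (forall t, 0 <= w t) ->
  (\sum_t w t * s t) ^+ 2 <= (\sum_t w t) * (\sum_t w t * s t ^+ 2).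
Proof.
move=> w0.
have H : 0 <= \sum_i \sum_j w i * w j * (s i - s j) ^+ 2.
  by apply: sumr_ge0 => i _; apply: sumr_ge0 => j _; rewrite mulr_ge0 ?sqr_ge0 ?mulr_ge0.
have E : \sum_i \sum_j w i * w j * (s i - s j) ^+ 2 =
   2%:R * ((\sum_t w t) * (\sum_t w t * s t ^+ 2) - (\sum_t w t * s t) ^+ 2).
  have E1 : forall i j, w i * w j * (s i - s j) ^+ 2 =
      w j * (w i * s i ^+ 2) + w i * (w j * s j ^+ 2) - 2%:R * ((w i * s i) * (w j * s j)).
    by move=> i j; ring.
  under eq_bigr => i _ do under eq_bigr => j _ do rewrite E1.
  under eq_bigr => i _ do rewrite sumrB big_split /= -!mulr_suml -mulr_sumr -mulr_sumr.
  rewrite sumrB big_split /= -!mulr_suml -!mulr_sumr expr2 -big_distrlr /=. ring.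
by move: H; rewrite E pmulr_rge0 ?subr_ge0 ?ltr0n.
Qed.

Lemma jensen (T : finType) (w s : T -> R) : (forall t, 0 <= w t) -> \sum_t w t = 1 ->
  \sum_t w t * `|s t| <= Num.sqrt (\sum_t w t * s t ^+ 2).
Proof.
move=> w0 w1.
have := CSw (fun t => `|s t|) w0; rewrite w1 mul1r.
under [X in _ <= X -> _]eq_bigr => t _ do rewrite real_normK ?num_real //.
move=> H; rewrite -(ger0_norm (x := \sum_t _)); last by apply: sumr_ge0 => t _; rewrite mulr_ge0.
rewrite -sqrtr_sqr ler_sqrt //; apply: sumr_ge0 => t _; rewrite mulr_ge0 ?sqr_ge0 //.
Qed.

Lemma sum_sqrt_le (T : finType) (c : T -> R) : (forall t, 0 <= c t) ->
  \sum_t Num.sqrt (c t) <= Num.sqrt (#|T|%:R * \sum_t c t).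
Proof.
move=> c0.
have H := @CSw T (fun=> 1) (fun t => Num.sqrt (c t)) (fun _ => ler01).
have E1 : \sum_t (fun=> 1) t * Num.sqrt (c t) ^+ 2 = \sum_t c t.
  by apply: eq_bigr => t _; rewrite mul1r sqr_sqrtr.
have E2 : \sum_t (fun=> 1) t * Num.sqrt (c t) = \sum_t Num.sqrt (c t).
  by apply: eq_bigr => t _; rewrite mul1r.
rewrite E1 E2 sumr_const in H.
rewrite -(ger0_norm (x := \sum_t _)); last by apply: sumr_ge0 => t _; rewrite sqrtr_ge0.
rewrite -sqrtr_sqr ler_sqrt; last by rewrite mulr_ge0 // sumr_ge0.
by rewrite -mulr_natl mulr1 in H.
Qed.

Definition dist (Y : finType) (q : Y -> R) := (forall y, 0 <= q y) /\ \sum_y q y = 1.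

Variables (I Y : finType) (q : I -> Y -> R).
Hypothesis hq : forall i, dist (q i).

Definition Pq (ys : {ffun I -> Y}) := \prod_i q i (ys i).

Lemma Pq_ge0 ys : 0 <= Pq ys.
Proof. by apply: prodr_ge0 => i _; case: (hq i). Qed.

Lemma Pq_sum1 : \sum_ys Pq ys = 1.
Proof. rewrite /Pq -bigA_distr_bigA; apply: big1 => i _; by case: (hq i). Qed.

Lemma Pq_marg a (g : Y -> R) : \sum_ys Pq ys * g (ys a) = \sum_y q a y * g y.
Proof.
have E : forall ys : {ffun I -> Y}, Pq ys * g (ys a) =
   \prod_i (q i (ys i) * (if i == a then g (ys i) else 1)).
  move=> ys; rewrite big_split /=; congr (_ * _).
  rewrite (bigD1 a) //= eqxx big1 ?mulr1 // => i /negPf -> //.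
under eq_bigr => ys _ do rewrite E.
rewrite -(bigA_distr_bigA (fun i y => q i y * (if i == a then g y else 1))) (bigD1 a) //= [X in _ * X]big1 ?mulr1.
  by apply: eq_bigr => y _; rewrite eqxx.
by move=> i /negPf ia; under eq_bigr => y _ do rewrite ia mulr1; case: (hq i).
Qed.

Lemma Pq_marg2 a b (g h : Y -> R) : a != b ->
  \sum_ys Pq ys * (g (ys a) * h (ys b)) = (\sum_y q a y * g y) * (\sum_y q b y * h y).
Proof.
move=> ab.
have E : forall ys : {ffun I -> Y}, Pq ys * (g (ys a) * h (ys b)) =
   \prod_i (q i (ys i) * ((if i == a then g (ys i) else 1) * (if i == b then h (ys i) else 1))).
  move=> ys; rewrite big_split /= big_split /=; congr (_ * (_ * _)).
    rewrite (bigD1 a) //= eqxx big1 ?mulr1 // => i /negPf -> //.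
  rewrite (bigD1 b) //= eqxx big1 ?mulr1 // => i /negPf -> //.
under eq_bigr => ys _ do rewrite E.
rewrite -(bigA_distr_bigA (fun i y => q i y * ((if i == a then g y else 1) * (if i == b then h y else 1)))) (bigD1 a) //= (bigD1 b) //=; last by rewrite eq_sym.
rewrite [X in _ * (_ * X)]big1 ?mulr1.
  congr (_ * _).
    by apply: eq_bigr => y _; rewrite eqxx (negPf ab) mulr1.
  by apply: eq_bigr => y _; rewrite eqxx eq_sym (negPf ab) mul1r.
move=> i /andP[ib ia]; under eq_bigr => y _ do rewrite (negPf ib) (negPf ia) !mulr1.
by case: (hq i).
Qed.

Lemma conc (f : I -> Y -> R) :
  \sum_ys Pq ys * `|\sum_i (f i (ys i) - \sum_y q i y * f i y)|
  <= Num.sqrt (\sum_i \sum_y q i y * f i y ^+ 2).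
Proof.
set m := fun i => \sum_y q i y * f i y.
apply: le_trans (jensen _ Pq_ge0 Pq_sum1) _.
rewrite ler_sqrt; last by apply: sumr_ge0 => i _; apply: sumr_ge0 => y _;
  rewrite mulr_ge0 ?sqr_ge0 //; case: (hq i).
have E : forall ys : {ffun I -> Y}, Pq ys * (\sum_i (f i (ys i) - m i)) ^+ 2 =
   \sum_i \sum_j Pq ys * ((f i (ys i) - m i) * (f j (ys j) - m j)).
  move=> ys; rewrite expr2 mulr_suml mulr_sumr; apply: eq_bigr => i _.
  by rewrite mulr_sumr mulr_sumr; apply: eq_bigr => j _; rewrite mulrA.
under eq_bigr => ys _ do rewrite E.
rewrite exchange_big /=; apply: ler_sum => i _.
rewrite exchange_big /= (bigD1 i) //= [X in _ + X]big1 ?addr0.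
  under eq_bigr => ys _ do rewrite -expr2.
  rewrite (Pq_marg i (fun y => (f i y - m i) ^+ 2)).
  have -> : \sum_y q i y * (f i y - m i) ^+ 2 = \sum_y q i y * f i y ^+ 2 - m i ^+ 2.
    have -> : \sum_y q i y * (f i y - m i) ^+ 2 =
       \sum_y (q i y * f i y ^+ 2 - 2%:R * m i * (q i y * f i y) + m i ^+ 2 * q i y).
      by apply: eq_bigr => y _; ring.
    rewrite big_split /= sumrB -!mulr_sumr /= -/(m i); case: (hq i) => _ ->; ring.
  by rewrite lerBlDr lerDl sqr_ge0.
move=> j ji; rewrite (Pq_marg2 (fun y => f i y - m i) (fun y => f j y - m j)); last by rewrite eq_sym.
have -> : \sum_y q i y * (f i y - m i) = 0.
  under eq_bigr => y _ do rewrite mulrBr.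
  by rewrite sumrB -mulr_suml; case: (hq i) => _ ->; rewrite mul1r subrr.
by rewrite mul0r.
Qed.

End Gen.

Section Agents.
Variables (R : realType) (K : nat) (N : 'I_K -> nat).
Local Notation ag := (agent N).

Lemma sum_cls (G : ag -> R) k :
  \sum_(a : ag | tag a == k) G a = \sum_(j : 'I_(N k)) G (Tagged (fun i => 'I_(N i)) j).
Proof.
have := @sig_big_dep R 0 +%R 'I_K (fun i => 'I_(N i)) (pred1 k) (fun _ _ => true)
   (fun i j => G (Tagged (fun i => 'I_(N i)) j)).
rewrite big_pred1_eq => ->; apply: eq_big => [[i j]|[i j] _] //=; by rewrite andbT.
Qed.

Lemma card_cls k : \sum_(a : ag | tag a == k) (1 : R) = (N k)%:R.
Proof. by rewrite sum_cls sumr_const card_ord. Qed.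

Lemma sum_part (G : ag -> R) : \sum_(a : ag) G a = \sum_(k < K) \sum_(a : ag | tag a == k) G a.
Proof. exact: (partition_big tag predT). Qed.

Lemma card_ag : \sum_(a : ag) (1 : R) = (Npop N)%:R.
Proof.
rewrite sum_part /Npop natr_sum; apply: eq_bigr => k _; exact: card_cls.
Qed.

Definition emp (Y : finType) (ys : {ffun ag -> Y}) : {ffun Y * 'I_K -> R} :=
  [ffun p : Y * 'I_K => (\sum_(a : ag | tag a == p.2) (ys a == p.1)%:R) / (Npop N)%:R].

Lemma emp_sum (Y : finType) (ys : {ffun ag -> Y}) k (g : Y -> R) :
  \sum_y emp ys (y, k) * g y = (\sum_(a : ag | tag a == k) g (ys a)) / (Npop N)%:R.
Proof.
under eq_bigr => y _ do rewrite ffunE /= mulrAC mulr_suml.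
rewrite -mulr_suml exchange_big /=; congr (_ * _); apply: eq_bigr => a _.
rewrite (bigD1 (ys a)) //= eqxx mul1r big1 ?addr0 // => y /negPf.
by rewrite eq_sym => ->; rewrite mul0r.
Qed.

Hypothesis Npos : (0 < Npop N)%N.

Lemma emp_distr (Y : finType) (ys : {ffun ag -> Y}) : is_distr (emp ys).
Proof.
split => [p|]; first by rewrite ffunE divr_ge0 // sumr_ge0.
rewrite (eq_bigr (fun p => emp ys (p.1, p.2))); last by case.
rewrite -(pair_bigA _ (fun y k => emp ys (y, k))) exchange_big /=.
under eq_bigr => k _ do under eq_bigr => y _ do rewrite -[emp _ _]mulr1.
under eq_bigr => k _ do rewrite emp_sum card_cls.
by rewrite -mulr_suml -natr_sum -/(Npop N) divff // pnatr_eq0 -lt0n.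
Qed.

End Agents.

Section Conc.
Variables (R : realType) (K : nat) (N : 'I_K -> nat).
Local Notation ag := (agent N).

Lemma dist_le1 (Z : finType) (h : Z -> R) : dist h -> forall z, h z <= 1.
Proof.
case=> h0 h1 z; rewrite -h1 (bigD1 z) //= lerDl sumr_ge0 //.
Qed.

Lemma dist_sq (Z : finType) (h : Z -> R) : dist h -> \sum_z h z ^+ 2 <= 1.
Proof.
move=> hd; have [h0 h1] := hd; rewrite -[X in _ <= X]h1; apply: ler_sum => z _.
by rewrite expr2 ler_piMr // dist_le1.
Qed.

Variables (Y Z : finType) (q : ag -> Y -> R) (h : ag -> Y -> Z -> R).
Hypothesis hq : forall a, dist (q a).
Hypothesis hh : forall a y, dist (h a y).

Lemma emp_conc :
  \sum_ys Pq q ys * \sum_(p : Z * 'I_K)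
      `|(\sum_(a : ag | tag a == p.2) (h a (ys a) p.1 - \sum_y q a y * h a y p.1)) / (Npop N)%:R|
  <= Num.sqrt #|Z|%:R * ((Npop N)%:R^-1 * \sum_k Num.sqrt (N k)%:R).
Proof.
pose c k z := \sum_(a : ag | tag a == k) \sum_y q a y * h a y z ^+ 2.
have step : forall (p : Z * 'I_K), \sum_ys Pq q ys *
      `|(\sum_(a : ag | tag a == p.2) (h a (ys a) p.1 - \sum_y q a y * h a y p.1)) / (Npop N)%:R|
   <= Num.sqrt (c p.2 p.1) * (Npop N)%:R^-1.
  case=> z k /=.
  pose f a y := (tag a == k)%:R * h a y z.
  have E : forall ys : {ffun ag -> Y},
      \sum_(a : ag | tag a == k) (h a (ys a) z - \sum_y q a y * h a y z)
      = \sum_a (f a (ys a) - \sum_y q a y * f a y).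
    move=> ys; rewrite big_mkcond /=; apply: eq_bigr => a _.
    rewrite /f; case: (tag a == k); rewrite ?mul1r ?mul0r //.
      by under [in RHS]eq_bigr => y _ do rewrite mul1r.
    by under [in RHS]eq_bigr => y _ do rewrite mul0r mulr0; rewrite big1 // subrr.
  under eq_bigr => ys _ do rewrite E normrM mulrA.
  rewrite -mulr_suml ger0_norm ?invr_ge0 // ler_wpM2r ?invr_ge0 //.
  apply: le_trans (conc hq f) _; rewrite ler_sqrt; last first.
    by apply: sumr_ge0 => a _; apply: sumr_ge0 => y _; rewrite mulr_ge0 ?sqr_ge0 //; case: (hq a).
  rewrite /c [X in _ <= X]big_mkcond /=; apply: ler_sum => a _; rewrite /f; case: (tag a == k).
    by apply: ler_sum => y _; rewrite mul1r.
  by rewrite big1 // => y _; rewrite mul0r expr2 mul0r mulr0.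
apply: le_trans (_ : \sum_(p : Z * 'I_K) Num.sqrt (c p.2 p.1) * (Npop N)%:R^-1 <= _).
  under eq_bigr => ys _ do rewrite mulr_sumr.
  by rewrite exchange_big /=; apply: ler_sum => p _; exact: step.
rewrite -mulr_suml -(pair_bigA _ (fun z k => Num.sqrt (c k z))) /= exchange_big /=.
rewrite mulrC mulrCA ler_wpM2l ?invr_ge0 // mulr_sumr; apply: ler_sum => k _.
apply: le_trans (sum_sqrt_le _) _.
  by move=> z; apply: sumr_ge0 => a _; apply: sumr_ge0 => y _; rewrite mulr_ge0 ?sqr_ge0 //; case: (hq a).
rewrite -sqrtrM // ler_sqrt ?mulr_ge0 // ler_wpM2l // /c exchange_big /= -card_cls.
apply: ler_sum => a _; rewrite exchange_big /=.
under eq_bigr => y _ do rewrite -mulr_sumr.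
have [q0 q1] := hq a; rewrite -[X in _ <= X]q1; apply: ler_sum => y _.
by rewrite ler_piMr // dist_sq.
Qed.

End Conc.

Section Lip.
Variables (R : realType) (X U W : finType) (K : nat).
Variables (mu1 mu2 : X * 'I_K -> R) (p1 p2 : 'I_K -> X -> U -> R)
  (G1 G2 : 'I_K -> X -> U -> W -> R) (B D Lq : R).
Hypotheses (mu2_0 : forall z, 0 <= mu2 z) (mu2_1 : \sum_k \sum_x mu2 (x, k) = 1).
Hypotheses (p1_0 : forall k x u, 0 <= p1 k x u) (p1_1 : forall k x, \sum_u p1 k x u = 1).
Hypotheses (p2_0 : forall k x u, 0 <= p2 k x u) (p2_1 : forall k x, \sum_u p2 k x u = 1).
Hypotheses (hB : forall k x u, \sum_w `|G1 k x u w| <= B)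
  (hD : forall k x u, \sum_w `|G1 k x u w - G2 k x u w| <= D)
  (hL : forall k x, \sum_u `|p1 k x u - p2 k x u| <= Lq) (B0 : 0 <= B).

Lemma lip3 :
  \sum_k \sum_w `|\sum_x \sum_u (mu1 (x, k) * p1 k x u * G1 k x u w - mu2 (x, k) * p2 k x u * G2 k x u w)|
  <= B * (\sum_k \sum_x `|mu1 (x, k) - mu2 (x, k)|) + B * Lq + D.
Proof.
pose T k x u w := `|mu1 (x, k) - mu2 (x, k)| * p1 k x u * `|G1 k x u w|
   + mu2 (x, k) * `|p1 k x u - p2 k x u| * `|G1 k x u w|
   + mu2 (x, k) * p2 k x u * `|G1 k x u w - G2 k x u w|.
apply: le_trans (_ : \sum_k \sum_w \sum_x \sum_u T k x u w <= _).
  apply: ler_sum => k _; apply: ler_sum => w _.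
  apply: le_trans (ler_norm_sum _ _ _) _; apply: ler_sum => x _.
  apply: le_trans (ler_norm_sum _ _ _) _; apply: ler_sum => u _.
  have -> : mu1 (x, k) * p1 k x u * G1 k x u w - mu2 (x, k) * p2 k x u * G2 k x u w =
     (mu1 (x, k) - mu2 (x, k)) * p1 k x u * G1 k x u w
     + mu2 (x, k) * (p1 k x u - p2 k x u) * G1 k x u w
     + mu2 (x, k) * p2 k x u * (G1 k x u w - G2 k x u w) by ring.
  rewrite /T; apply: le_trans (ler_normD _ _) _; apply: lerD; last first.
    by rewrite !normrM (ger0_norm (mu2_0 _)) (ger0_norm (p2_0 _ _ _)).
  apply: le_trans (ler_normD _ _) _; apply: lerD.
    by rewrite !normrM (ger0_norm (p1_0 _ _ _)).
  by rewrite !normrM (ger0_norm (mu2_0 _)).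
apply: le_trans (_ : \sum_k \sum_x (B * `|mu1 (x, k) - mu2 (x, k)| + B * Lq * mu2 (x, k) + D * mu2 (x, k)) <= _); last first.
  under eq_bigr => k _ do rewrite !big_split /= -!mulr_sumr.
  by rewrite !big_split /= -!mulr_sumr mu2_1 !mulr1.
apply: ler_sum => k _; rewrite exchange_big /=; apply: ler_sum => x _; rewrite exchange_big /=.
apply: le_trans (_ : \sum_u (`|mu1 (x, k) - mu2 (x, k)| * p1 k x u * B
    + mu2 (x, k) * `|p1 k x u - p2 k x u| * B + mu2 (x, k) * p2 k x u * D) <= _).
  apply: ler_sum => u _; rewrite /T !big_split /= -!mulr_sumr.
  apply: lerD; first apply: lerD.
  - by rewrite ler_wpM2l ?mulr_ge0.
  - by rewrite ler_wpM2l ?mulr_ge0.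
  - by rewrite ler_wpM2l ?mulr_ge0.
have -> : \sum_u (`|mu1 (x, k) - mu2 (x, k)| * p1 k x u * B
    + mu2 (x, k) * `|p1 k x u - p2 k x u| * B + mu2 (x, k) * p2 k x u * D)
  = `|mu1 (x, k) - mu2 (x, k)| * B * \sum_u p1 k x u + mu2 (x, k) * B * \sum_u `|p1 k x u - p2 k x u|
    + mu2 (x, k) * D * \sum_u p2 k x u.
  by rewrite !mulr_sumr -!big_split /=; apply: eq_bigr => u _; ring.
rewrite p1_1 p2_1 !mulr1 (mulrC B) (mulrC D) lerD2r lerD2l [B * Lq * _]mulrC -mulrA ler_wpM2l //.
by rewrite ler_wpM2l.
Qed.
End Lip.

Lemma sum_unit (R : realType) (f : unit -> R) : \sum_w f w = f tt.
Proof. by rewrite (bigD1 tt) //= big1 ?addr0 // => -[]; rewrite eqxx. Qed.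

Lemma sumXK (R : realType) (A B : finType) (g : A * B -> R) :
  \sum_p g p = \sum_b \sum_a g (a, b).
Proof.
rewrite (eq_bigr (fun p => g (p.1, p.2))); last by case.
by rewrite -(pair_bigA _ (fun a b => g (a, b))) exchange_big.
Qed.

Section Model.
Variables (R : realType) (X U : finType) (K : nat) (N : 'I_K -> nat).
Variables (r : reward_t R X U K) (P : trans_t R X U K) (pi : policy_t R X U K).
Variables (M_R L_R L_P L_Q : R).
Hypothesis hPd : forall k x u mu nu, is_distr mu -> is_distr nu -> is_distr (P k x u mu nu).
Hypothesis hrM : forall k x u mu nu, is_distr mu -> is_distr nu -> `|r k x u mu nu| <= M_R.
Hypothesis hrL : forall k x u mu1 mu2 nu1 nu2, is_distr mu1 -> is_distr mu2 ->
     is_distr nu1 -> is_distr nu2 ->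
     `|r k x u mu1 nu1 - r k x u mu2 nu2| <= L_R * (l1 mu1 mu2 + l1 nu1 nu2).
Hypothesis hPL : forall k x u mu1 mu2 nu1 nu2, is_distr mu1 -> is_distr mu2 ->
     is_distr nu1 -> is_distr nu2 ->
     l1 (P k x u mu1 nu1) (P k x u mu2 nu2) <= L_P * (l1 mu1 mu2 + l1 nu1 nu2).
Hypothesis hpid : forall t k x mu, is_distr mu -> is_distr (pi t k x mu).
Hypothesis hpiL : forall t k x mu1 mu2, is_distr mu1 -> is_distr mu2 ->
     l1 (pi t k x mu1) (pi t k x mu2) <= L_Q * l1 mu1 mu2.
Hypothesis LP0 : 0 < L_P.
Hypothesis LQ0 : 0 < L_Q.
Hypothesis LR0 : 0 < L_R.
Hypothesis MR0 : 0 < M_R.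

Lemma l1E (mu1 mu2 : jdistX R X K) : l1 mu1 mu2 = \sum_k \sum_x `|mu1 (x, k) - mu2 (x, k)|.
Proof. by rewrite /l1 sumXK. Qed.

Lemma l1_ge0 (A : finType) (p q : {ffun A -> R}) : 0 <= l1 p q.
Proof. by rewrite /l1 sumr_ge0. Qed.

Lemma nuMF_distr t mu : is_distr mu -> is_distr (nuMF mu (pi t)).
Proof.
move=> hmu; have [m0 m1] := hmu; split => [p|].
  rewrite ffunE sumr_ge0 // => x _; rewrite mulr_ge0 //; by case: (hpid t p.2 x hmu).
rewrite sumXK -m1 sumXK; apply: eq_bigr => k _.
under eq_bigr => u _ do rewrite ffunE /=.
rewrite exchange_big /=; apply: eq_bigr => x _.
by rewrite -mulr_suml; case: (hpid t k x hmu) => _ ->; rewrite mul1r.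
Qed.

Lemma PMF_distr t mu : is_distr mu -> is_distr (PMF P mu (pi t)).
Proof.
move=> hmu; have [m0 m1] := hmu; have hnu := nuMF_distr t hmu; split => [p|].
  rewrite ffunE sumr_ge0 // => x _; rewrite sumr_ge0 // => u _.
  rewrite !mulr_ge0 //; [by case: (hpid t p.2 x hmu) | by case: (hPd p.2 x u hmu hnu)].
rewrite sumXK -m1 sumXK; apply: eq_bigr => k _.
under eq_bigr => x' _ do rewrite ffunE /=.
rewrite exchange_big /=; apply: eq_bigr => x _.
rewrite exchange_big /=.
under eq_bigr => u _ do rewrite -mulr_sumr.
under eq_bigr => u _ do rewrite (proj2 (hPd k x u hmu hnu)) mulr1.
by rewrite -mulr_sumr; case: (hpid t k x hmu) => _ ->; rewrite mulr1.
Qed.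

Lemma traj_distr mu0 t : is_distr mu0 -> is_distr (mu_traj P pi mu0 t).
Proof. by move=> h; elim: t => [|t IH] //=; exact: PMF_distr. Qed.


Lemma delta_sum (W : finType) (f : W -> R) w : \sum_u f u * (u == w)%:R = f w.
Proof.
rewrite (bigD1 w) //= eqxx mulr1 big1 ?addr0 // => u /negPf ->; by rewrite mulr0.
Qed.

Lemma delta_sum1 (W : finType) (u : W) : \sum_w `|(u == w)%:R : R| = 1.
Proof.
under eq_bigr => w _ do rewrite normr_nat -[(_ == _)%:R]mul1r eq_sym.
by rewrite (delta_sum (fun=> 1)).
Qed.

Lemma nu_lip t mu1 mu2 : is_distr mu1 -> is_distr mu2 ->
  l1 (nuMF mu1 (pi t)) (nuMF mu2 (pi t)) <= (1 + L_Q) * l1 mu1 mu2.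
Proof.
move=> h1 h2; have [m20 m21] := h2.
have L := @lip3 R X U U K mu1 mu2 (fun k x u => pi t k x mu1 u) (fun k x u => pi t k x mu2 u)
  (fun k x u w => (u == w)%:R) (fun k x u w => (u == w)%:R) 1 0 (L_Q * l1 mu1 mu2) m20
  (etrans (esym (sumXK (fun p => mu2 p))) m21) (fun k x => proj1 (hpid t k x h1)) (fun k x => proj2 (hpid t k x h1))
  (fun k x => proj1 (hpid t k x h2)) (fun k x => proj2 (hpid t k x h2))
  (fun k x u => ltac:(by rewrite /= delta_sum1))
  (fun k x u => ltac:(by rewrite /= big1 // => w _; rewrite subrr normr0)) (fun k x => hpiL t k x h1 h2) ler01.
have E : l1 (nuMF mu1 (pi t)) (nuMF mu2 (pi t)) =
   \sum_k \sum_w `|\sum_x \sum_u (mu1 (x, k) * pi t k x mu1 u * (u == w)%:R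
        - mu2 (x, k) * pi t k x mu2 u * (u == w)%:R)|.
  rewrite /l1 sumXK; apply: eq_bigr => k _; apply: eq_bigr => w _; rewrite !ffunE /= -sumrB.
  congr `|_|; apply: eq_bigr => x _; rewrite sumrB !delta_sum; congr (_ - _); exact: mulrC.
rewrite E; apply: le_trans L _; rewrite -l1E; lra.
Qed.

Lemma PMF_lip t mu1 mu2 : is_distr mu1 -> is_distr mu2 ->
  l1 (PMF P mu1 (pi t)) (PMF P mu2 (pi t)) <= ((1 + L_Q) + L_P * (2 + L_Q)) * l1 mu1 mu2.
Proof.
move=> h1 h2; have [m20 m21] := h2.
have hn1 := nuMF_distr t h1; have hn2 := nuMF_distr t h2.
have L := @lip3 R X U X K mu1 mu2 (fun k x u => pi t k x mu1 u) (fun k x u => pi t k x mu2 u)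
  (fun k x u w => P k x u mu1 (nuMF mu1 (pi t)) w) (fun k x u w => P k x u mu2 (nuMF mu2 (pi t)) w)
  1 (L_P * (l1 mu1 mu2 + l1 (nuMF mu1 (pi t)) (nuMF mu2 (pi t)))) (L_Q * l1 mu1 mu2) m20
  (etrans (esym (sumXK (fun p => mu2 p))) m21) (fun k x => proj1 (hpid t k x h1)) (fun k x => proj2 (hpid t k x h1))
  (fun k x => proj1 (hpid t k x h2)) (fun k x => proj2 (hpid t k x h2))
  (fun k x u => ltac:(by move=> /=; have [P0 P1] := hPd k x u h1 hn1; rewrite -P1; apply: ler_sum => w _;
      rewrite ger0_norm))
  (fun k x u => hPL k x u h1 h2 hn1 hn2) (fun k x => hpiL t k x h1 h2) ler01.
have E : l1 (PMF P mu1 (pi t)) (PMF P mu2 (pi t)) =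
   \sum_k \sum_w `|\sum_x \sum_u (mu1 (x, k) * pi t k x mu1 u * P k x u mu1 (nuMF mu1 (pi t)) w
        - mu2 (x, k) * pi t k x mu2 u * P k x u mu2 (nuMF mu2 (pi t)) w)|.
  rewrite /l1 sumXK; apply: eq_bigr => k _; apply: eq_bigr => w _; rewrite !ffunE /= -sumrB.
  by congr `|_|; apply: eq_bigr => x _; rewrite sumrB.
rewrite E; apply: le_trans L _; rewrite -l1E.
have Hn := nu_lip t h1 h2; have l0 := l1_ge0 mu1 mu2.
have H3 := ler_wpM2l (ltW LP0) Hn; have H4 := ler_wpM2l (ltW LR0) Hn; nra.
Qed.

Lemma rMF_lip t mu1 mu2 : is_distr mu1 -> is_distr mu2 ->
  \sum_k `|rMF r k mu1 (pi t) - rMF r k mu2 (pi t)|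
    <= (M_R * (1 + L_Q) + L_R * (2 + L_Q)) * l1 mu1 mu2.
Proof.
move=> h1 h2; have [m20 m21] := h2.
have hn1 := nuMF_distr t h1; have hn2 := nuMF_distr t h2.
have L := @lip3 R X U unit K mu1 mu2 (fun k x u => pi t k x mu1 u) (fun k x u => pi t k x mu2 u)
  (fun k x u w => r k x u mu1 (nuMF mu1 (pi t))) (fun k x u w => r k x u mu2 (nuMF mu2 (pi t)))
  M_R (L_R * (l1 mu1 mu2 + l1 (nuMF mu1 (pi t)) (nuMF mu2 (pi t)))) (L_Q * l1 mu1 mu2) m20
  (etrans (esym (sumXK (fun p => mu2 p))) m21) (fun k x => proj1 (hpid t k x h1)) (fun k x => proj2 (hpid t k x h1))
  (fun k x => proj1 (hpid t k x h2)) (fun k x => proj2 (hpid t k x h2))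
  (fun k x u => ltac:(by rewrite sum_unit; apply: hrM))
  (fun k x u => ltac:(by rewrite sum_unit; apply: hrL)) (fun k x => hpiL t k x h1 h2) (ltW MR0).
have E : \sum_k `|rMF r k mu1 (pi t) - rMF r k mu2 (pi t)| =
   \sum_k \sum_(w : unit) `|\sum_x \sum_u (mu1 (x, k) * pi t k x mu1 u * r k x u mu1 (nuMF mu1 (pi t))
        - mu2 (x, k) * pi t k x mu2 u * r k x u mu2 (nuMF mu2 (pi t)))|.
  apply: eq_bigr => k _; rewrite sum_unit /rMF -sumrB.
  by congr `|_|; apply: eq_bigr => x _; rewrite sumrB.
rewrite E; apply: le_trans L _; rewrite -l1E.
have Hn := nu_lip t h1 h2; have l0 := l1_ge0 mu1 mu2.
have H3 := ler_wpM2l (ltW LP0) Hn; have H4 := ler_wpM2l (ltW LR0) Hn; nra.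
Qed.

End Model.

Lemma l1_tri (R : realType) (A : finType) (p q s : {ffun A -> R}) : l1 p s <= l1 p q + l1 q s.
Proof.
rewrite /l1 -big_split /=; apply: ler_sum => a _.
by rewrite (_ : p a - s a = (p a - q a) + (q a - s a)) ?ler_normD // subrKA.
Qed.

Lemma eqle (R : realType) (x y : R) : x = y -> x <= y. Proof. by move->. Qed.

Lemma wsum (R : realType) (T : finType) (w l : T -> R) C S : \sum_t w t = 1 ->
  \sum_t w t * (C + S * l t) = C + S * \sum_t w t * l t.
Proof.
move=> w1; rewrite -[X in _ = X + _]mulr1 -w1 !mulr_sumr -big_split /=.
by apply: eq_bigr => t _; ring.
Qed.

Section Dyn.
Variables (R : realType) (X U : finType) (K : nat) (N : 'I_K -> nat).
Variables (r : reward_t R X U K) (P : trans_t R X U K) (pi : policy_t R X U K).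
Variables (M_R L_R L_P L_Q : R).
Hypothesis hPd : forall k x u mu nu, is_distr mu -> is_distr nu -> is_distr (P k x u mu nu).
Hypothesis hrM : forall k x u mu nu, is_distr mu -> is_distr nu -> `|r k x u mu nu| <= M_R.
Hypothesis hrL : forall k x u mu1 mu2 nu1 nu2, is_distr mu1 -> is_distr mu2 ->
     is_distr nu1 -> is_distr nu2 ->
     `|r k x u mu1 nu1 - r k x u mu2 nu2| <= L_R * (l1 mu1 mu2 + l1 nu1 nu2).
Hypothesis hPL : forall k x u mu1 mu2 nu1 nu2, is_distr mu1 -> is_distr mu2 ->
     is_distr nu1 -> is_distr nu2 ->
     l1 (P k x u mu1 nu1) (P k x u mu2 nu2) <= L_P * (l1 mu1 mu2 + l1 nu1 nu2).
Hypothesis hpid : forall t k x mu, is_distr mu -> is_distr (pi t k x mu).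
Hypothesis hpiL : forall t k x mu1 mu2, is_distr mu1 -> is_distr mu2 ->
     l1 (pi t k x mu1) (pi t k x mu2) <= L_Q * l1 mu1 mu2.
Hypothesis LP0 : 0 < L_P.
Hypothesis LQ0 : 0 < L_Q.
Hypothesis LR0 : 0 < L_R.
Hypothesis MR0 : 0 < M_R.
Hypothesis Npos : (0 < Npop N)%N.

Local Notation ag := (agent N).
Local Notation Np := ((Npop N)%:R : R).
Local Notation e := (Np^-1 * \sum_k Num.sqrt ((N k)%:R : R)).

Lemma emp_muE (xs : {ffun ag -> X}) : emp_mu R xs = emp R xs. Proof. by []. Qed.
Lemma emp_nuE (us : {ffun ag -> U}) : emp_nu R us = emp R us. Proof. by []. Qed.

Lemma sum_tag (F : 'I_K -> ag -> R) k :
  \sum_(a : ag | tag a == k) F (tag a) a = \sum_(a : ag | tag a == k) F k a.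
Proof. by apply: eq_bigr => a /eqP ->. Qed.

Lemma delta_dist (W : finType) (w : W) : dist (fun z : W => (w == z)%:R : R).
Proof.
split => [z|]; first by rewrite ler0n.
by rewrite (bigD1 w) //= eqxx big1 ?addr0 // => z; rewrite eq_sym => /negPf ->.
Qed.


Lemma rMF_bound t k mu : is_distr mu -> `|rMF r k mu (pi t)| <= M_R.
Proof.
move=> hmu; have [m0 m1] := hmu; have hnu := nuMF_distr hpid t hmu.
rewrite /rMF; apply: le_trans (ler_norm_sum _ _ _) _.
apply: le_trans (_ : \sum_x mu (x, k) * M_R <= _).
  apply: ler_sum => x _; apply: le_trans (ler_norm_sum _ _ _) _.
  apply: le_trans (_ : \sum_u mu (x, k) * pi t k x mu u * M_R <= _).
    apply: ler_sum => u _; rewrite normrM ger0_norm; last by rewrite mulr_ge0 //; case: (hpid t k x hmu).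
    by rewrite ler_wpM2l ?mulr_ge0 //; [case: (hpid t k x hmu)| exact: hrM].
  rewrite -mulr_suml -mulr_sumr; case: (hpid t k x hmu) => _ ->; by rewrite mulr1.
rewrite -mulr_suml ler_piMl ?(ltW MR0) //.
rewrite -m1 sumXK (bigD1 k) //= lerDl; apply: sumr_ge0 => i _; exact: sumr_ge0.
Qed.

Section FixXs.
Variables (t : nat) (xs : {ffun ag -> X}).
Let mu := emp_mu R xs.
Let hmu : is_distr mu := emp_distr R Npos xs.
Let q (a : ag) : U -> R := fun u => pi t (tag a) (xs a) mu u.
Let hq : forall a, dist (q a) := fun a => hpid t (tag a) (xs a) hmu.
Let nuh := nuMF mu (pi t).

Lemma nu_conc :
  \sum_us act_prob pi t xs us * l1 (emp_nu R us) nuh <= Num.sqrt (#|U|%:R) * e.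
Proof.
have L := @emp_conc R K N U U q (fun a u w => (u == w)%:R) hq (fun a u => delta_dist u).
apply: le_trans L; apply: eqle; apply: eq_bigr => us _; congr (_ * _).
rewrite /l1; apply: eq_bigr => -[w k] _ /=; rewrite !ffunE /=.
rewrite sumrB mulrBl; congr (`|_ - _|).
rewrite (eq_bigr (fun x => mu (x, k) * pi t k x mu w)); last by move=> x _; rewrite mulrC.
rewrite /mu emp_muE emp_sum -emp_muE; congr (_ / _).
under [RHS]eq_bigr => a _ do rewrite delta_sum.
by rewrite /q (sum_tag (fun k a => pi t k (xs a) (emp_mu R xs) w)).
Qed.


Let hnuh : is_distr nuh := nuMF_distr hpid t hmu.

Definition M1 (us : {ffun ag -> U}) : {ffun X * 'I_K -> R} :=
  [ffun p : X * 'I_K => (\sum_(a : ag | tag a == p.2) P (tag a) (xs a) (us a) mu (emp_nu R us) p.1) / Np].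
Definition M2 (us : {ffun ag -> U}) : {ffun X * 'I_K -> R} :=
  [ffun p : X * 'I_K => (\sum_(a : ag | tag a == p.2) P (tag a) (xs a) (us a) mu nuh p.1) / Np].

Lemma P_conc :
  \sum_us act_prob pi t xs us * l1 (M2 us) (PMF P mu (pi t)) <= Num.sqrt (#|X|%:R) * e.
Proof.
have L := @emp_conc R K N U X q (fun a u w => P (tag a) (xs a) u mu nuh w) hq
   (fun a u => hPd (tag a) (xs a) u hmu hnuh).
apply: le_trans L; apply: eqle; apply: eq_bigr => us _; congr (_ * _).
rewrite /l1; apply: eq_bigr => -[w k] _ /=; rewrite !ffunE /=.
rewrite sumrB mulrBl; congr (`|_ - _|).
rewrite (eq_bigr (fun x => mu (x, k) * \sum_u pi t k x mu u * P k x u mu nuh w)); last first.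
  by move=> x _; rewrite mulr_sumr; apply: eq_bigr => u _; rewrite mulrA.
rewrite /mu emp_muE emp_sum -emp_muE; congr (_ / _).
by rewrite /q (sum_tag (fun k a => \sum_u pi t k (xs a) (emp_mu R xs) u * P k (xs a) u (emp_mu R xs) nuh w)).
Qed.

Lemma l1_refl (A : finType) (p : {ffun A -> R}) : l1 p p = 0.
Proof. by rewrite /l1 big1 // => a _; rewrite subrr normr0. Qed.

Lemma Np0 : Np != 0.
Proof. by rewrite pnatr_eq0 -lt0n. Qed.

Lemma M12 us : l1 (M1 us) (M2 us) <= L_P * l1 (emp_nu R us) nuh.
Proof.
have hnu : is_distr (emp_nu R us) := emp_distr R Npos us.
rewrite /l1 sumXK.
apply: le_trans (_ : \sum_k \sum_w \sum_(a : ag | tag a == k)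
   `|P (tag a) (xs a) (us a) mu (emp_nu R us) w - P (tag a) (xs a) (us a) mu nuh w| * Np^-1 <= _).
  apply: ler_sum => k _; apply: ler_sum => w _; rewrite !ffunE /= -mulrBl -sumrB normrM.
  rewrite (ger0_norm (x := Np^-1)) ?invr_ge0 // -mulr_suml ler_wpM2r ?invr_ge0 //.
  exact: ler_norm_sum.
under eq_bigr => k _ do rewrite exchange_big /=.
rewrite -sum_part.
apply: le_trans (_ : \sum_(a : ag) L_P * l1 (emp_nu R us) nuh * Np^-1 <= _).
  apply: ler_sum => a _; rewrite -mulr_suml ler_wpM2r ?invr_ge0 //.
  by have := hPL (tag a) (xs a) (us a) hmu hmu hnu hnuh; rewrite l1_refl add0r.
rewrite (_ : \sum_(a : ag) L_P * l1 (emp_nu R us) nuh * Np^-1 =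
   L_P * l1 (emp_nu R us) nuh * Np^-1 * \sum_(a : ag) 1); last first.
  by rewrite [RHS]mulr_sumr; apply: eq_bigr => a _; rewrite mulr1.
by rewrite card_ag -mulrA mulVf ?Np0 // mulr1.
Qed.

Lemma st_conc us :
  \sum_xs' step_prob P xs us xs' * l1 (emp_mu R xs') (M1 us) <= Num.sqrt (#|X|%:R) * e.
Proof.
have hnu : is_distr (emp_nu R us) := emp_distr R Npos us.
have L := @emp_conc R K N X X (fun a w => P (tag a) (xs a) (us a) mu (emp_nu R us) w)
   (fun a u w => (u == w)%:R) (fun a => hPd (tag a) (xs a) (us a) hmu hnu) (fun a u => delta_dist u).
apply: le_trans L; apply: eqle; apply: eq_bigr => xs' _; congr (_ * _).
rewrite /l1; apply: eq_bigr => -[w k] _ /=; rewrite !ffunE /=.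
rewrite sumrB mulrBl; congr (`|_ - _|); congr (_ / _).
by apply: eq_bigr => a _; rewrite delta_sum.
Qed.


Lemma act_sum1 : \sum_us act_prob pi t xs us = 1.
Proof. exact: (Pq_sum1 hq). Qed.

Lemma act_ge0 us : 0 <= act_prob pi t xs us.
Proof. exact: (Pq_ge0 hq). Qed.

Lemma one_step mut : is_distr mut ->
  \sum_us act_prob pi t xs us * \sum_xs' step_prob P xs us xs' * l1 (emp_mu R xs') (PMF P mut (pi t))
  <= ((1 + L_Q) + L_P * (2 + L_Q)) * l1 mu mut
     + (Num.sqrt (#|X|%:R) * e + L_P * (Num.sqrt (#|U|%:R) * e) + Num.sqrt (#|X|%:R) * e).
Proof.
move=> hmut.
set SP := (1 + L_Q) + L_P * (2 + L_Q).
set cX := Num.sqrt (#|X|%:R) * e.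
apply: le_trans (_ : \sum_us act_prob pi t xs us * (cX + L_P * l1 (emp_nu R us) nuh
    + l1 (M2 us) (PMF P mu (pi t)) + SP * l1 mu mut) <= _).
  apply: ler_sum => us _; apply: ler_wpM2l; first exact: act_ge0.
  have hnu : is_distr (emp_nu R us) := emp_distr R Npos us.
  have hq' : forall a, dist (fun w => P (tag a) (xs a) (us a) mu (emp_nu R us) w) :=
    fun a => hPd (tag a) (xs a) (us a) hmu hnu.
  set C := l1 (M1 us) (M2 us) + l1 (M2 us) (PMF P mu (pi t)) + l1 (PMF P mu (pi t)) (PMF P mut (pi t)).
  apply: le_trans (_ : \sum_xs' step_prob P xs us xs' * (l1 (emp_mu R xs') (M1 us) + C) <= _).
    apply: ler_sum => xs' _; apply: ler_wpM2l; first exact: (Pq_ge0 hq').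
    apply: le_trans (l1_tri _ (M1 us) _) _; rewrite lerD2l /C -addrA.
    apply: le_trans (l1_tri _ (M2 us) _) _; rewrite lerD2l.
    exact: l1_tri.
  have -> : \sum_xs' step_prob P xs us xs' * (l1 (emp_mu R xs') (M1 us) + C) =
      \sum_xs' step_prob P xs us xs' * l1 (emp_mu R xs') (M1 us) + C * \sum_xs' step_prob P xs us xs'.
    by rewrite mulr_sumr -big_split /=; apply: eq_bigr => xs' _; ring.
  rewrite (Pq_sum1 hq') mulr1 /C -!addrA; apply: lerD; first exact: st_conc.
  apply: lerD; first exact: M12.
  apply: lerD => //; exact: PMF_lip.
have -> : \sum_us act_prob pi t xs us * (cX + L_P * l1 (emp_nu R us) nuh
    + l1 (M2 us) (PMF P mu (pi t)) + SP * l1 mu mut) =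
   (cX + SP * l1 mu mut) * \sum_us act_prob pi t xs us
   + L_P * \sum_us act_prob pi t xs us * l1 (emp_nu R us) nuh
   + \sum_us act_prob pi t xs us * l1 (M2 us) (PMF P mu (pi t)).
  by rewrite !mulr_sumr -!big_split /=; apply: eq_bigr => us _; ring.
rewrite act_sum1 mulr1.
have H1 := nu_conc; have H2 := P_conc.
have H3 := ler_wpM2l (ltW LP0) H1.
rewrite -/cX in H2 *; lra.
Qed.


Lemma rew_one mut : is_distr mut ->
  `|\sum_us act_prob pi t xs us *
      ((\sum_(a : ag) r (tag a) (xs a) (us a) (emp_mu R xs) (emp_nu R us)) / Np)
    - \sum_k rMF r k mut (pi t)|
  <= L_R * (Num.sqrt (#|U|%:R) * e) + (M_R * (1 + L_Q) + L_R * (2 + L_Q)) * l1 mu mut.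
Proof.
move=> hmut.
pose g (a : ag) u := r (tag a) (xs a) u mu nuh.
have mid : \sum_us act_prob pi t xs us * ((\sum_(a : ag) g a (us a)) / Np) = \sum_k rMF r k mu (pi t).
  have -> : \sum_us act_prob pi t xs us * ((\sum_(a : ag) g a (us a)) / Np) =
      (\sum_(a : ag) \sum_us act_prob pi t xs us * g a (us a)) / Np.
    rewrite exchange_big mulr_suml; apply: eq_bigr => us _.
    by rewrite mulrA; congr (_ * _); rewrite mulr_sumr.
  under eq_bigr => a _ do rewrite (Pq_marg hq a (g a)).
  rewrite sum_part mulr_suml; apply: eq_bigr => k _.
  rewrite /rMF (eq_bigr (fun x => mu (x, k) * \sum_u pi t k x mu u * r k x u mu nuh)); last first.
    by move=> x _; rewrite mulr_sumr; apply: eq_bigr => u _; rewrite mulrA.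
  rewrite /mu emp_muE emp_sum -emp_muE; congr (_ / _).
  by rewrite /q /g (sum_tag (fun k a => \sum_u pi t k (xs a) (emp_mu R xs) u * r k (xs a) u (emp_mu R xs) nuh)).
have -> : \sum_us act_prob pi t xs us *
      ((\sum_(a : ag) r (tag a) (xs a) (us a) (emp_mu R xs) (emp_nu R us)) / Np)
    - \sum_k rMF r k mut (pi t) =
    \sum_us act_prob pi t xs us * ((\sum_(a : ag) (r (tag a) (xs a) (us a) mu (emp_nu R us) - g a (us a))) / Np)
    + \sum_k (rMF r k mu (pi t) - rMF r k mut (pi t)).
  rewrite [X in _ = _ + X]sumrB -mid addrA; congr (_ - _); rewrite -big_split /=; apply: eq_bigr => us _.
  by rewrite sumrB /mu; ring.
apply: le_trans (ler_normD _ _) _; apply: lerD; last first.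
  by apply: le_trans (ler_norm_sum _ _ _) _; exact: rMF_lip.
apply: le_trans (ler_norm_sum _ _ _) _.
apply: le_trans (_ : \sum_us act_prob pi t xs us * (L_R * l1 (emp_nu R us) nuh) <= _).
  apply: ler_sum => us _; rewrite normrM (ger0_norm (act_ge0 us)); apply: ler_wpM2l; first exact: act_ge0.
  have hnu : is_distr (emp_nu R us) := emp_distr R Npos us.
  rewrite normrM (ger0_norm (x := Np^-1)) ?invr_ge0 //.
  apply: le_trans (_ : \sum_(a : ag) (L_R * l1 (emp_nu R us) nuh) * Np^-1 <= _).
    rewrite -mulr_suml ler_wpM2r ?invr_ge0 //; apply: le_trans (ler_norm_sum _ _ _) _.
    apply: ler_sum => a _; have := hrL (tag a) (xs a) (us a) hmu hmu hnu hnuh.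
    by rewrite l1_refl add0r.
  rewrite (_ : \sum_(a : ag) L_R * l1 (emp_nu R us) nuh * Np^-1 =
     L_R * l1 (emp_nu R us) nuh * Np^-1 * \sum_(a : ag) 1); last first.
    by rewrite [RHS]mulr_sumr; apply: eq_bigr => a _; rewrite mulr1.
  by rewrite card_ag -mulrA mulVf ?Np0 // mulr1.
under eq_bigr => us _ do rewrite mulrCA.
by rewrite -mulr_sumr ler_wpM2l ?(ltW LR0) //; exact: nu_conc.
Qed.

End FixXs.

Lemma step_dist (xs : {ffun ag -> X}) (us : {ffun ag -> U}) :
  forall a : ag, dist (fun w => P (tag a) (xs a) (us a) (emp_mu R xs) (emp_nu R us) w).
Proof. move=> a; exact: hPd (emp_distr R Npos xs) (emp_distr R Npos us). Qed.

Lemma step_ge0 (xs : {ffun ag -> X}) (us : {ffun ag -> U}) xs' : 0 <= step_prob P xs us xs'.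
Proof. exact: (Pq_ge0 (step_dist xs us)). Qed.

Lemma step_sum1 (xs : {ffun ag -> X}) (us : {ffun ag -> U}) : \sum_xs' step_prob P xs us xs' = 1.
Proof. exact: (Pq_sum1 (step_dist xs us)). Qed.

Variable x0 : {ffun ag -> X}.
Local Notation mu0 := (emp_mu R x0).
Local Notation Lt := (state_law P pi x0).
Local Notation mt := (mu_traj P pi mu0).

Lemma law_distr t : (forall xs, 0 <= Lt t xs) /\ \sum_xs Lt t xs = 1.
Proof.
elim: t => [|t [L0 L1]].
  split => [xs|]; first by rewrite ffunE ler0n.
  under eq_bigr => xs _ do rewrite ffunE.
  by rewrite (bigD1 x0) //= eqxx big1 ?addr0 // => xs /negPf ->.
split => [xs'|].
  rewrite ffunE; apply: sumr_ge0 => xs _; apply: sumr_ge0 => us _.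
  by rewrite !mulr_ge0 ?act_ge0 ?step_ge0.
under eq_bigr => xs' _ do rewrite ffunE.
rewrite exchange_big /= -[RHS]L1; apply: eq_bigr => xs _.
rewrite exchange_big /=.
under eq_bigr => us _ do rewrite -mulr_sumr step_sum1 mulr1.
by rewrite -mulr_sumr act_sum1 mulr1.
Qed.

Definition Dt t := \sum_xs Lt t xs * l1 (emp_mu R xs) (mt t).

Lemma D0 : Dt 0 = 0.
Proof.
rewrite /Dt /= (bigD1 x0) //= ffunE eqxx mul1r l1_refl add0r big1 // => xs xsx.
by rewrite ffunE (negPf xsx) mul0r.
Qed.

Lemma D_ge0 t : 0 <= Dt t.
Proof. by apply: sumr_ge0 => xs _; rewrite mulr_ge0 ?l1_ge0 //; case: (law_distr t). Qed.

Lemma D_rec t : Dt t.+1 <= ((1 + L_Q) + L_P * (2 + L_Q)) * Dt t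
     + (Num.sqrt (#|X|%:R) * e + L_P * (Num.sqrt (#|U|%:R) * e) + Num.sqrt (#|X|%:R) * e).
Proof.
set SP := (1 + L_Q) + L_P * (2 + L_Q).
set c := (Num.sqrt (#|X|%:R) * e + L_P * (Num.sqrt (#|U|%:R) * e) + Num.sqrt (#|X|%:R) * e).
have [L0 L1] := law_distr t.
have hmt : is_distr (mt t) := traj_distr hPd hpid t (emp_distr R Npos x0).
have -> : Dt t.+1 = \sum_xs Lt t xs * (\sum_us act_prob pi t xs us *
     \sum_xs' step_prob P xs us xs' * l1 (emp_mu R xs') (PMF P (mt t) (pi t))).
  rewrite /Dt /=.
  under eq_bigr => xs' _ do rewrite ffunE mulr_suml.
  rewrite exchange_big /=; apply: eq_bigr => xs _.
  under eq_bigr => xs' _ do rewrite mulr_suml.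
  rewrite exchange_big /= mulr_sumr; apply: eq_bigr => us _.
  rewrite mulr_sumr mulr_sumr; apply: eq_bigr => xs' _; ring.
apply: le_trans (_ : \sum_xs Lt t xs * (SP * l1 (emp_mu R xs) (mt t) + c) <= _).
  apply: ler_sum => xs _; apply: ler_wpM2l => //; exact: one_step.
have -> : \sum_xs Lt t xs * (SP * l1 (emp_mu R xs) (mt t) + c) = SP * Dt t + c * \sum_xs Lt t xs.
  by rewrite /Dt !mulr_sumr -big_split /=; apply: eq_bigr => xs _; ring.
by rewrite L1 mulr1.
Qed.

Lemma err_bound t :
  `|exp_reward r P pi x0 t - \sum_k rMF r k (mt t) (pi t)|
   <= L_R * (Num.sqrt (#|U|%:R) * e) + (M_R * (1 + L_Q) + L_R * (2 + L_Q)) * Dt t.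
Proof.
have [L0 L1] := law_distr t.
have hmt : is_distr (mt t) := traj_distr hPd hpid t (emp_distr R Npos x0).
have -> : exp_reward r P pi x0 t - \sum_k rMF r k (mt t) (pi t) =
   \sum_xs Lt t xs * (\sum_us act_prob pi t xs us *
      ((\sum_(a : ag) r (tag a) (xs a) (us a) (emp_mu R xs) (emp_nu R us)) / Np)
    - \sum_k rMF r k (mt t) (pi t)).
  rewrite /exp_reward; under [RHS]eq_bigr => xs _ do rewrite mulrBr.
  rewrite sumrB -mulr_suml L1 mul1r; congr (_ - _); apply: eq_bigr => xs _.
  by rewrite [RHS]mulr_sumr; under eq_bigr => us _ do rewrite -mulrA.
apply: le_trans (ler_norm_sum _ _ _) _.
apply: le_trans (_ : \sum_xs Lt t xs * (L_R * (Num.sqrt (#|U|%:R) * e)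
     + (M_R * (1 + L_Q) + L_R * (2 + L_Q)) * l1 (emp_mu R xs) (mt t)) <= _).
  apply: ler_sum => xs _; rewrite normrM ger0_norm //; apply: ler_wpM2l => //; exact: rew_one.
by apply: eqle; rewrite /Dt wsum.
Qed.


Lemma D_bound t : Dt t <= (Num.sqrt (#|X|%:R) * e + L_P * (Num.sqrt (#|U|%:R) * e) + Num.sqrt (#|X|%:R) * e)
   * (((1 + L_Q) + L_P * (2 + L_Q)) ^+ t - 1) / (((1 + L_Q) + L_P * (2 + L_Q)) - 1).
Proof.
set SP := (1 + L_Q) + L_P * (2 + L_Q).
set c := (Num.sqrt (#|X|%:R) * e + L_P * (Num.sqrt (#|U|%:R) * e) + Num.sqrt (#|X|%:R) * e).
have SP1 : SP - 1 != 0.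
  rewrite /SP gt_eqF // (_ : 1 + L_Q + L_P * (2 + L_Q) - 1 = L_Q + L_P * (2 + L_Q)); last by ring.
  by rewrite addr_gt0 // mulr_gt0 // addr_gt0.
have SP0 : 0 <= SP by rewrite /SP addr_ge0 ?mulr_ge0 ?addr_ge0 // ltW.
elim: t => [|t IH]; first by rewrite D0 expr0 subrr mulr0 mul0r.
apply: le_trans (D_rec t) _; rewrite -/SP -/c.
apply: le_trans (_ : SP * (c * (SP ^+ t - 1) / (SP - 1)) + c <= _).
  by rewrite lerD2r ler_wpM2l.
by apply: eqle; rewrite exprS; field.
Qed.

Lemma exp_bound t : `|exp_reward r P pi x0 t| <= M_R.
Proof.
have [L0 L1] := law_distr t.
have hr : forall (xs : {ffun ag -> X}) (us : {ffun ag -> U}),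
    `|(\sum_(a : ag) r (tag a) (xs a) (us a) (emp_mu R xs) (emp_nu R us)) / Np| <= M_R.
  move=> xs us; rewrite normrM (ger0_norm (x := Np^-1)) ?invr_ge0 //.
  apply: le_trans (_ : (\sum_(a : ag) M_R) * Np^-1 <= _).
    rewrite ler_wpM2r ?invr_ge0 //; apply: le_trans (ler_norm_sum _ _ _) _.
    by apply: ler_sum => a _; apply: hrM; exact: emp_distr.
  rewrite (_ : \sum_(a : ag) M_R = M_R * \sum_(a : ag) 1); last first.
    by rewrite [RHS]mulr_sumr; apply: eq_bigr => a _; rewrite mulr1.
  by rewrite card_ag -mulrA mulfV ?Np0 // mulr1.
rewrite /exp_reward; apply: le_trans (ler_norm_sum _ _ _) _.
apply: le_trans (_ : \sum_xs Lt t xs * M_R <= _); last by rewrite -mulr_suml L1 mul1r.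
apply: ler_sum => xs _; apply: le_trans (ler_norm_sum _ _ _) _.
apply: le_trans (_ : \sum_us Lt t xs * act_prob pi t xs us * M_R <= _).
  apply: ler_sum => us _; rewrite normrM ger0_norm; last by rewrite mulr_ge0 ?act_ge0.
  by rewrite ler_wpM2l ?mulr_ge0 ?act_ge0.
by rewrite -mulr_suml -mulr_sumr act_sum1 mulr1.
Qed.

End Dyn.

Import numFieldNormedType.Exports.

Section Ana.
Variable R : realType.

Lemma cvg_geo_bound (g M : R) (v : nat -> R) : 0 <= g -> g < 1 -> (forall t, `|v t| <= M) ->
  cvgn (series (fun t => g ^+ t * v t) : R^nat).
Proof.
move=> g0 g1 hv; have M0 : 0 <= M by apply: le_trans (hv 0%N).
apply: normed_cvg.
apply: (@series_le_cvg R _ (geometric M g)).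
- by move=> n; rewrite normr_ge0.
- by move=> n; rewrite /geometric /= mulr_ge0 // exprn_ge0.
- move=> n; rewrite /geometric /= normrM ger0_norm ?exprn_ge0 // mulrC.
  by rewrite ler_wpM2r ?exprn_ge0.
- by apply: is_cvg_geometric_series; rewrite ger0_norm.
Qed.

Lemma lim_fsum (I : finType) (b : I -> nat -> R) : (forall i, cvgn (b i)) ->
  cvgn (fun n => \sum_i b i n) /\ limn (fun n => \sum_i b i n) = \sum_i limn (b i).
Proof.
move=> hb; rewrite /index_enum; elim: (Finite.enum I) => [|i s [IH1 IH2]].
  under [fun n => _]funext => n do rewrite big_nil.
  by rewrite big_nil; split; [exact: is_cvg_cst | exact: lim_cst].
under [fun n => _]funext => n do rewrite big_cons.
rewrite big_cons; split.
  exact: (is_cvgD (hb i) IH1).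
by rewrite (limD (hb i) IH1) IH2.
Qed.

Lemma lim_diff_bound (K : nat) (a : nat -> R) (b : 'I_K -> nat -> R) (B : R) :
  cvgn (series a) -> (forall k, cvgn (series (b k))) ->
  (forall n, `|series a n - \sum_k series (b k) n| <= B) ->
  `|limn (series a) - \sum_k limn (series (b k))| <= B.
Proof.
move=> ha hb hB.
have [c1 c2] := lim_fsum hb.
rewrite -c2 -(limB ha c1) -lim_norm; last exact: is_cvgB ha c1.
apply: limr_le; first exact: (is_cvg_norm (is_cvgB ha c1)).
by apply: nearW => n; exact: hB.
Qed.

Lemma geo_sum (z : R) n : (1 - z) * \sum_(0 <= t < n) z ^+ t = 1 - z ^+ n.
Proof.
elim: n => [|n IH]; first by rewrite big_geq // mulr0 expr0 subrr.
by rewrite big_nat_recr //= mulrDr IH exprS; ring.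
Qed.


Lemma psum_bound (g S A Kp : R) (n : nat) : 0 <= g -> g * S < 1 -> 1 <= S -> 0 <= A -> 0 <= Kp ->
  \sum_(0 <= t < n) g ^+ t * (A + Kp * (S ^+ t - 1))
    <= A / (1 - g) + Kp * ((1 - g * S)^-1 - (1 - g)^-1).
Proof.
move=> g0 gS1 S1 A0 K0.
have gleS : g <= g * S by rewrite ler_peMr.
have g1 : g < 1 by apply: le_lt_trans gleS gS1.
have -> : \sum_(0 <= t < n) g ^+ t * (A + Kp * (S ^+ t - 1)) =
   A * \sum_(0 <= t < n) g ^+ t + Kp * \sum_(0 <= t < n) (g * S) ^+ t - Kp * \sum_(0 <= t < n) g ^+ t.
  rewrite !mulr_sumr -big_split -sumrB /=; apply: eq_bigr => t _; rewrite exprMn; ring.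
have e1 := geo_sum g n; have e2 := geo_sum (g * S) n.
set G1 := \sum_(0 <= t < n) g ^+ t in e1 *; set G2 := \sum_(0 <= t < n) (g * S) ^+ t in e2 *.
have d1 : 0 < 1 - g by rewrite subr_gt0.
have d2 : 0 < 1 - g * S by rewrite subr_gt0.
set u := (1 - g)^-1; set v := (1 - g * S)^-1.
have u0 : 0 < u by rewrite invr_gt0.
have uv : u <= v by rewrite lef_pV2 ?posrE // lerD2l lerN2.
have G1E : G1 = (1 - g ^+ n) * u.
  by rewrite /u -e1 mulrC mulrA mulVf ?mul1r // gt_eqF.
have G2E : G2 = (1 - (g * S) ^+ n) * v.
  by rewrite /v -e2 mulrC mulrA mulVf ?mul1r // gt_eqF.
rewrite G1E G2E.
set p := g ^+ n; set q := (g * S) ^+ n.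
have p0 : 0 <= p by rewrite exprn_ge0.
have pq : p <= q by rewrite /p /q lerXn2r // nnegrE // (le_trans g0 gleS).
have h1 : p * u <= q * v by rewrite ler_pM // ltW.
have h2 : 0 <= A * (p * u) by rewrite !mulr_ge0 // ltW.
have h3 : 0 <= Kp * (q * v - p * u) by rewrite mulr_ge0 // subr_ge0.
rewrite -/u; lra.
Qed.

End Ana.

Unset Implicit Arguments.

Theorem theorem1 (R : realType) (X U : finType) (K : nat) (N : 'I_K -> nat)
  (r : reward_t R X U K) (P : trans_t R X U K) (pi : policy_t R X U K)
  (M_R L_R L_P L_Q gamma : R)
  (x0 : {ffun agent N -> X}) :
  (0 < K)%N ->
  (forall k, 0 < N k)%N ->
  0 < M_R -> 0 < L_R -> 0 < L_P -> 0 < L_Q ->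
  0 <= gamma -> gamma < 1 ->
  (* model assumptions *)
  (forall k x u mu nu, is_distr mu -> is_distr nu -> is_distr (P k x u mu nu)) ->
  (forall k x u mu nu, is_distr mu -> is_distr nu -> `|r k x u mu nu| <= M_R) ->
  (forall k x u mu1 mu2 nu1 nu2, is_distr mu1 -> is_distr mu2 ->
     is_distr nu1 -> is_distr nu2 ->
     `|r k x u mu1 nu1 - r k x u mu2 nu2| <= L_R * (l1 mu1 mu2 + l1 nu1 nu2)) ->
  (forall k x u mu1 mu2 nu1 nu2, is_distr mu1 -> is_distr mu2 ->
     is_distr nu1 -> is_distr nu2 ->
     l1 (P k x u mu1 nu1) (P k x u mu2 nu2) <= L_P * (l1 mu1 mu2 + l1 nu1 nu2)) ->
  (* pi is a policy in Pi *)
  (forall t k x mu, is_distr mu -> is_distr (pi t k x mu)) ->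
  (forall t k x mu1 mu2, is_distr mu1 -> is_distr mu2 ->
     l1 (pi t k x mu1) (pi t k x mu2) <= L_Q * l1 mu1 mu2) ->
  let S_R := M_R * (1 + L_Q) + L_R * (2 + L_Q) in
  let S_P := (1 + L_Q) + L_P * (2 + L_Q) in
  let C_R := M_R + L_R in
  let C_P := 2 + L_P in
  let mu0 := @emp_mu R X K N x0 in
  let sumsq := \sum_(k < K) Num.sqrt ((N k)%:R : R) in
  gamma * S_P < 1 ->
  `|vN r P pi gamma x0 - vMF r P pi gamma mu0| <=
    C_R / (1 - gamma) * Num.sqrt (#|U|%:R) * ((Npop N)%:R^-1 * sumsq)
    + C_P * (S_R / (S_P - 1)) * Num.sqrt ((#|X| * #|U|)%:R)
        * ((Npop N)%:R^-1 * sumsq)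
        * ((1 - gamma * S_P)^-1 - (1 - gamma)^-1).

Proof.
move=> K0 N0 MR0 LR0 LP0 LQ0 g0 g1 hPd hrM hrL hPL hpid hpiL S_R S_P C_R C_P mu0 sumsq gSP.
have k0 : 'I_K := Ordinal K0.
have Npos : (0 < Npop N)%N.
  by rewrite /Npop (bigD1 k0) //= addn_gt0 N0.
set Np := ((Npop N)%:R : R).
have Np0 : 0 < Np by rewrite ltr0n.
set e := Np^-1 * sumsq.
have e0 : 0 <= e by apply: mulr_ge0; [rewrite invr_ge0 ltW | rewrite /sumsq sumr_ge0 // => k _; rewrite sqrtr_ge0].
pose a0 : agent N := Tagged (fun k => 'I_(N k)) (Ordinal (N0 k0)).
have X0 : (0 < #|X|)%N by apply/card_gt0P; exists (x0 a0).
have U0 : (0 < #|U|)%N.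
  case: (pickP (fun _ : U => true)) => [u _|none]; first by apply/card_gt0P; exists u.
  have := proj2 (hpid 0%N k0 (x0 a0) mu0 (emp_distr R Npos x0)).
  by rewrite big_pred0 // => /eqP; rewrite eq_sym oner_eq0.
set c := Num.sqrt (#|X|%:R) * e + L_P * (Num.sqrt (#|U|%:R) * e) + Num.sqrt (#|X|%:R) * e.
set A := L_R * (Num.sqrt (#|U|%:R) * e).
have SP1 : 0 < S_P - 1.
  rewrite /S_P (_ : 1 + L_Q + L_P * (2 + L_Q) - 1 = L_Q + L_P * (2 + L_Q)); last by ring.
  by rewrite addr_gt0 // mulr_gt0 // addr_gt0.
set Kp := S_R * c / (S_P - 1).
have hX : 0 <= Num.sqrt (#|X|%:R) * e := mulr_ge0 (sqrtr_ge0 _) e0.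
have hU : 0 <= Num.sqrt (#|U|%:R) * e := mulr_ge0 (sqrtr_ge0 _) e0.
have hU' := mulr_ge0 (ltW LP0) hU.
have c0 : 0 <= c by rewrite /c; lra.
have SR0 : 0 <= S_R.
  by rewrite /S_R; apply: addr_ge0; apply: mulr_ge0; rewrite ?(ltW MR0) ?(ltW LR0) //; lra.
have Kp0 : 0 <= Kp by rewrite /Kp; apply: mulr_ge0; [exact: mulr_ge0 | rewrite invr_ge0 ltW].
have A0 : 0 <= A by rewrite /A; exact: mulr_ge0 (ltW LR0) hU.
have hmt : forall t, is_distr (mu_traj P pi mu0 t) := fun t => traj_distr hPd hpid t (emp_distr R Npos x0).
have errb : forall t, `|exp_reward r P pi x0 t - \sum_k rMF r k (mu_traj P pi mu0 t) (pi t)|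
     <= A + Kp * (S_P ^+ t - 1).
  move=> t; apply: le_trans (err_bound hPd hrM hrL hpid hpiL LR0 MR0 Npos x0 t) _.
  rewrite lerD2l /Kp.
  apply: le_trans (_ : S_R * (c * (S_P ^+ t - 1) / (S_P - 1)) <= _).
    by rewrite ler_wpM2l // (D_bound hPd hPL hpid hpiL LP0 LQ0 Npos x0 t).
  by apply: eqle; rewrite !mulrA mulrAC.
have bnd : A / (1 - gamma) + Kp * ((1 - gamma * S_P)^-1 - (1 - gamma)^-1) <=
    C_R / (1 - gamma) * Num.sqrt (#|U|%:R) * ((Npop N)%:R^-1 * sumsq)
    + C_P * (S_R / (S_P - 1)) * Num.sqrt ((#|X| * #|U|)%:R)
        * ((Npop N)%:R^-1 * sumsq)
        * ((1 - gamma * S_P)^-1 - (1 - gamma)^-1).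
  have sX1 : 1 <= Num.sqrt (#|X|%:R : R) by rewrite -[X in X <= _]sqrtr1 ler_sqrt ?ler0n // ler1n.
  have sU1 : 1 <= Num.sqrt (#|U|%:R : R) by rewrite -[X in X <= _]sqrtr1 ler_sqrt ?ler0n // ler1n.
  have hXU : Num.sqrt ((#|X| * #|U|)%:R : R) = Num.sqrt (#|X|%:R) * Num.sqrt (#|U|%:R).
    by rewrite natrM sqrtrM // ler0n.
  rewrite hXU -/e.
  have d1 : 0 < 1 - gamma by rewrite subr_gt0.
  have gleS : gamma <= gamma * S_P by rewrite ler_peMr //; lra.
  have d2 : 0 < 1 - gamma * S_P by rewrite subr_gt0.
  set u := (1 - gamma)^-1; set v := (1 - gamma * S_P)^-1.
  have u0 : 0 < u by rewrite invr_gt0.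
  have uv : u <= v by rewrite lef_pV2 ?posrE // lerD2l lerN2.
  set w := S_R / (S_P - 1).
  have w0 : 0 <= w by rewrite /w mulr_ge0 // invr_ge0 ltW.
  have hc : c <= C_P * (Num.sqrt (#|X|%:R : R) * Num.sqrt (#|U|%:R : R)) * e.
    have hh1 : 0 <= Num.sqrt (#|X|%:R : R) * e * (Num.sqrt (#|U|%:R : R) - 1) by rewrite mulr_ge0 ?subr_ge0 // mulr_ge0 // le_trans _ sX1.
    have hh2 : 0 <= L_P * (Num.sqrt (#|U|%:R : R) * e) * (Num.sqrt (#|X|%:R : R) - 1) by rewrite mulr_ge0 ?subr_ge0.
    rewrite /c /C_P; nra.
  have H2 : Kp * (v - u) <= w * (C_P * (Num.sqrt (#|X|%:R : R) * Num.sqrt (#|U|%:R : R)) * e) * (v - u).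
    rewrite (_ : Kp = w * c); last by rewrite /Kp /w mulrAC.
    by rewrite ler_wpM2r ?subr_ge0 // ler_wpM2l.
  have H1 : 0 <= M_R * (Num.sqrt (#|U|%:R : R) * e) * u.
    by apply: mulr_ge0; [exact: mulr_ge0 (ltW MR0) hU | exact: ltW].
  rewrite /A /C_R; nra.
rewrite /vN /vMF.
apply: lim_diff_bound.
- apply: (cvg_geo_bound (M := M_R) g0 g1) => t.
  exact: (exp_bound hPd hrM hpid Npos x0 t).
- move=> k; apply: (cvg_geo_bound (M := M_R) g0 g1) => t.
  exact: (rMF_bound hrM hpid MR0 t k (hmt t)).
move=> n; apply: le_trans bnd.
apply: le_trans (psum_bound n g0 gSP _ A0 Kp0); last by lra.
rewrite /series /= exchange_big /= -sumrB.
apply: le_trans (ler_norm_sum _ _ _) _; apply: ler_sum => t _.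
rewrite -mulr_sumr -mulrBr normrM ger0_norm ?exprn_ge0 // ler_wpM2l ?exprn_ge0 //; exact: errb.
Qed.
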